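(* The forgetful functor $U\colon \mathbf{Lens}\to\mathbf{Cat}$ preserves and reflects epimorphisms: a lens $E$ is an epimorphism in $\mathbf{Lens}$ if and only if its get functor $UE$ is an epimorphism in $\mathbf{Cat}$.
   Context: $\mathbf{Cat}$ is the category of small categories and functors. A lens $F\colon \mathbf{A}\to\mathbf{B}$ between small categories consists of a functor $F\colon\mathbf{A}\to\mathbf{B}$ (the get functor) together with, for each object $A$ of $\mathbf{A}$, a function $\varphi_{F,A}$ from the set of morphisms of $\mathbf{B}$ with domain $FA$ to the set of morphisms of $\mathbf{A}$ with domain $A$, such that: $F(\varphi_{F,A}b)=b$; $\varphi_{F,A}(\mathrm{id}_{FA})=\mathrm{id}_A$; and $\varphi_{F,A}(b'\circ b)=\varphi_{F,A'}(b')\circ\varphi_{F,A}(b)$ whenever $b$ has domain $FA$, $A'$ is the codomain of $\varphi_{F,A}b$, and $b'$ has domain $FA'$. $\mathbf{Lens}$ is the category of small categories and lenses; the composite of $F\colon\mathbf{A}\to\mathbf{B}$ and $G\colon\mathbf{B}\to\mathbf{C}$ has get functor $G\circ F$ and put functions $\varphi_{G\circ F,A}(c)=\varphi_{F,A}(\varphi_{G,FA}(c))$. $U\colon\mathbf{Lens}\to\mathbf{Cat}$ is the identity-on-objects functor sending a lens to its get functor. *)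

(* Defs.v *)
From Stdlib Require Import Eqdep Setoid.
Set Implicit Arguments.

Record Category := {
  Ob :> Type;
  Hom : Ob -> Ob -> Type;
  idm : forall a, Hom a a;
  comp : forall a b c, Hom b c -> Hom a b -> Hom a c;
  comp_id_l : forall a b (f : Hom a b), comp (idm b) f = f;
  comp_id_r : forall a b (f : Hom a b), comp f (idm a) = f;
  comp_assoc : forall a b c d (f : Hom a b) (g : Hom b c) (h : Hom c d),
      comp h (comp g f) = comp (comp h g) f
}.
Arguments Hom {C} a b : rename.
Arguments idm {C} a : rename.
Arguments comp {C a b c} g f : rename.

Definition Arr (C : Category) := { xy : Ob C * Ob C & Hom (fst xy) (snd xy) }.
Definition arr {C : Category} {x y : C} (f : Hom x y) : Arr C :=
  existT (fun xy : Ob C * Ob C => Hom (fst xy) (snd xy)) (x, y) f.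

Definition Out {C : Category} (x : C) := { y : Ob C & Hom x y }.

Record Functor (C D : Category) := {
  fobj :> Ob C -> Ob D;
  fmap : forall a b, Hom a b -> Hom (fobj a) (fobj b);
  fmap_id : forall a, fmap a a (idm a) = idm (fobj a);
  fmap_comp : forall a b c (f : Hom a b) (g : Hom b c),
      fmap a c (comp g f) = comp (fmap b c g) (fmap a b f)
}.
Arguments fmap {C D} F {a b} f : rename.

Definition Functor_comp_obj {C D E : Category} (G : Functor D E) (F : Functor C D) :
  Functor C E.
Proof.
  refine {| fobj := fun a => G (F a);
            fmap := fun a b f => fmap G (fmap F f) |}.
  - intro a. rewrite !fmap_id. reflexivity.
  - intros. rewrite !fmap_comp. reflexivity.
Defined.

(** Equality of functors (as morphisms of Cat): they agree on every morphism,
    domains and codomains included. *)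
Definition functor_eq {C D : Category} (F G : Functor C D) : Prop :=
  forall (x y : C) (f : Hom x y), arr (fmap F f) = arr (fmap G f).

Definition cat_epi {A B : Category} (E : Functor A B) : Prop :=
  forall (C : Category) (G H : Functor B C),
    functor_eq (Functor_comp_obj G E) (Functor_comp_obj H E) -> functor_eq G H.

(** Lenses. [put a] is the function phi_{F,a} from morphisms of B with domain
    F a to morphisms of A with domain a. *)
Record Lens (A B : Category) := {
  get :> Functor A B;
  put : forall a : A, @Out B (get a) -> @Out A a;
  put_lift : forall (a : A) (u : @Out B (get a)),
      existT (fun y => Hom (get a) y) (get (projT1 (put a u))) (fmap get (projT2 (put a u))) = u;
  put_id : forall a : A, put a (existT _ (get a) (idm (get a))) = existT _ a (idm a);
  put_comp : forall (a a1 : A) (f : Hom (get a) (get a1)) (g : Hom a a1),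
      put a (existT _ (get a1) f) = existT _ a1 g ->
      forall v : @Out B (get a1),
        put a (existT _ (projT1 v) (comp (projT2 v) f))
        = existT _ (projT1 (put a1 v)) (comp (projT2 (put a1 v)) g)
}.
Arguments put {A B} L a u : rename.


Lemma lens_comp_put_lift {A B C : Category} (G : Lens B C) (F : Lens A B)
  (a : A) (u : @Out C (G (F a))) :
  existT (fun y => Hom (G (F a)) y)
    (G (F (projT1 (put F a (put G (F a) u)))))
    (fmap G (fmap F (projT2 (put F a (put G (F a) u))))) = u.
Proof.
  etransitivity; [| exact (put_lift G (F a) u)].
  exact (f_equal (fun w : @Out B (F a) =>
            existT (fun y => Hom (G (F a)) y) (G (projT1 w)) (fmap G (projT2 w)))
           (put_lift F a (put G (F a) u))).
Qed.

Definition lens_comp {A B C : Category} (G : Lens B C) (F : Lens A B) : Lens A C.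
Proof.
  refine {| get := Functor_comp_obj G F;
            put := fun a u => put F a (put G (F a) u) |}.
  - intros a u. apply lens_comp_put_lift.
  - intro a. simpl. rewrite (put_id G). apply (put_id F).
  - intros a a1 f g H v. simpl in *.
    pose proof (put_lift F a (put G (F a) (existT _ (G (F a1)) f))) as HL.
    rewrite H in HL. simpl in HL.
    assert (HG : put G (F a) (existT _ (G (F a1)) f)
                 = existT _ (F a1) (fmap F g)) by (symmetry; exact HL).
    rewrite HG in H.
    pose proof (@put_comp _ _ G (F a) (F a1) f (fmap F g) HG v) as HG2.
    rewrite HG2.
    apply (@put_comp _ _ F a a1 (fmap F g) g H).
Defined.

Definition lens_eq {A B : Category} (K L : Lens A B) : Prop :=
  functor_eq K L /\
  forall (a : A) (u : @Out B (K a)) (v : @Out B (L a)),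
    arr (projT2 u) = arr (projT2 v) -> put K a u = put L a v.

Definition lens_epi {A B : Category} (E : Lens A B) : Prop :=
  forall (C : Category) (K L : Lens B C),
    lens_eq (lens_comp K E) (lens_comp L E) -> lens_eq K L.

(* Main.v *)
Require Import Defs.
From Stdlib Require Import Eqdep ClassicalEpsilon ProofIrrelevance Classical.

Definition Im {A B : Category} (E : Lens A B) (b : B) : Prop := exists a, E a = b.

Lemma Im_fwd {A B : Category} (E : Lens A B) (c d : B) (f : Hom c d) :
  Im E c -> Im E d.
Proof.
  intros [a Ha]. subst c. pose proof (put_lift E a (existT _ d f)) as H.
  exists (projT1 (put E a (existT _ d f))). exact (f_equal (@projT1 _ _) H).
Qed.

Definition Rl {A B : Category} (E : Lens A B) (i j : bool) (b c : B) : Prop :=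
  if j then (i = true /\ (~ Im E c \/ Im E b)) else (i = false \/ Im E c).

Lemma Rl_refl {A B : Category} (E : Lens A B) i b : Rl E i i b b.
Proof.
  destruct i; simpl; [split; [reflexivity|] | left; reflexivity].
  destruct (classic (Im E b)); auto.
Qed.

Lemma Rl_trans {A B : Category} (E : Lens A B) (b c d : B) (f : Hom c d) i j k :
  Rl E i j b c -> Rl E j k c d -> Rl E i k b d.
Proof.
  pose proof (Im_fwd E c d f).
  destruct i, j, k; simpl; intros H1 H2; intuition (try discriminate).
Qed.

Lemma pair_eq {X : Type} {P : Prop} (x y : X * P) : fst x = fst y -> x = y.
Proof. destruct x, y; simpl; intros ->; f_equal; apply proof_irrelevance. Qed.

Definition CC {A B : Category} (E : Lens A B) : Category.
Proof.
  refine {| Ob := (Ob B * bool)%type;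
            Hom := fun p q => (Hom (fst p) (fst q) * Rl E (snd p) (snd q) (fst p) (fst q))%type;
            idm := fun p => (idm (fst p), Rl_refl E (snd p) (fst p));
            comp := fun p q r g f =>
              (comp (fst g) (fst f), Rl_trans E _ _ _ (fst g) _ _ _ (snd f) (snd g)) |}.
  - intros; apply pair_eq; simpl; apply comp_id_l.
  - intros; apply pair_eq; simpl; apply comp_id_r.
  - intros; apply pair_eq; simpl; apply comp_assoc.
Defined.

Definition TF {A B : Category} (E : Lens A B) (t : B -> bool)
  (Hft : forall b c (f : Hom b c), Rl E (t b) (t c) b c) : Functor B (CC E).
Proof.
  refine {| fobj := fun b => (b, t b) : Ob (CC E);
            fmap := fun b c f => (f, Hft b c f) |}.
  - intros; apply pair_eq; reflexivity.
  - intros; apply pair_eq; reflexivity.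
Defined.

Definition TL {A B : Category} (E : Lens A B) (t : B -> bool)
  (Hft : forall b c (f : Hom b c), Rl E (t b) (t c) b c)
  (Hlift : forall b c j (f : Hom b c), Rl E (t b) j b c -> t c = j) : Lens B (CC E).
Proof.
  refine {| get := TF E t Hft;
            put := fun b u => existT _ (fst (projT1 u)) (fst (projT2 u)) |}.
  - intros b u. destruct u as [[c j] [f r]]. simpl.
    destruct (Hlift b c j f r). f_equal. f_equal. apply proof_irrelevance.
  - intros; reflexivity.
  - intros a a1 f g H v. simpl in H. apply inj_pair2 in H.
    destruct v as [[c j] [h r]]. simpl. rewrite H. reflexivity.
Defined.

Definition tag {A B : Category} (E : Lens A B) (b : B) : bool :=
  if excluded_middle_informative (Im E b) then false else true.

Lemma tag_ft {A B : Category} (E : Lens A B) b c (f : Hom b c) :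
  Rl E (tag E b) (tag E c) b c.
Proof.
  unfold tag, Rl. pose proof (Im_fwd E b c f).
  destruct (excluded_middle_informative (Im E b)),
           (excluded_middle_informative (Im E c)); intuition.
Qed.

Lemma tag_lift {A B : Category} (E : Lens A B) b c j (f : Hom b c) :
  Rl E (tag E b) j b c -> tag E c = j.
Proof.
  unfold tag, Rl. pose proof (Im_fwd E b c f).
  destruct (excluded_middle_informative (Im E b)),
           (excluded_middle_informative (Im E c)), j; intuition (try discriminate).
Qed.

Lemma false_ft {A B : Category} (E : Lens A B) b c (f : Hom b c) :
  Rl E ((fun _ => false) b) ((fun _ => false) c) b c.
Proof. simpl. left; reflexivity. Qed.

Lemma false_lift {A B : Category} (E : Lens A B) b c j (f : Hom b c) :
  Rl E ((fun _ => false) b) j b c -> (fun _ : B => false) c = j.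
Proof. destruct j; simpl; intuition. Qed.

Lemma arr_out {B : Category} (x y y' : B) (f : Hom x y) (g : Hom x y') :
  arr f = arr g -> existT (fun z => Hom x z) y f = existT _ y' g.
Proof.
  intro H.
  assert (y = y') by exact (f_equal (fun p => snd (projT1 p)) H). subst y'.
  unfold arr in H. apply inj_pair2 in H. subst. reflexivity.
Qed.

Lemma arr_CC {A B : Category} (E : Lens A B) (b c : B) (f : Hom b c) i1 i2 j1 j2
  (p1 : Rl E i1 j1 b c) (p2 : Rl E i2 j2 b c) :
  i1 = i2 -> j1 = j2 ->
  @arr (CC E) (b, i1) (c, j1) (f, p1) = @arr (CC E) (b, i2) (c, j2) (f, p2).
Proof. intros -> ->. f_equal. f_equal. apply proof_irrelevance. Qed.

Lemma tag_im {A B : Category} (E : Lens A B) a : tag E (E a) = false.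
Proof.
  unfold tag. destruct (excluded_middle_informative (Im E (E a))) as [|n]; auto.
  exfalso; apply n; exists a; reflexivity.
Qed.

Lemma lens_epi_surj {A B : Category} (E : Lens A B) :
  lens_epi E -> forall b, Im E b.
Proof.
  intros He b.
  set (K := TL E (fun _ => false) (false_ft E) (false_lift E)).
  set (L := TL E (tag E) (tag_ft E) (tag_lift E)).
  assert (HKL : lens_eq (lens_comp K E) (lens_comp L E)).
  { split.
    - intros x y f.
      exact (arr_CC E _ _ (fmap E f) _ _ _ _ _ _ (eq_sym (tag_im E x)) (eq_sym (tag_im E y))).
    - intros a u v Huv. simpl. f_equal.
      apply (f_equal (fun w : Arr (CC E) =>
               existT (fun xy : Ob B * Ob B => Hom (fst xy) (snd xy))
                 (fst (fst (projT1 w)), fst (snd (projT1 w))) (fst (projT2 w)))) in Huv.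
      simpl in Huv. apply arr_out. exact Huv. }
  destruct (He _ K L HKL) as [HF _].
  specialize (HF b b (idm b)).
  apply (f_equal (fun p => snd (fst (projT1 p)))) in HF. simpl in HF.
  unfold tag in HF. destruct (excluded_middle_informative (Im E b)); auto.
  discriminate.
Qed.

Definition Indisc : Category.
Proof.
  refine {| Ob := bool; Hom := fun _ _ => unit; idm := fun _ => tt;
            comp := fun _ _ _ _ _ => tt |}; intros; try destruct f; reflexivity.
Defined.

Definition IF {B : Category} (t : B -> bool) : Functor B Indisc.
Proof.
  refine {| fobj := t : B -> Ob Indisc; fmap := fun _ _ _ => tt : @Hom Indisc _ _ |};
  reflexivity.
Defined.

Lemma cat_epi_surj {A B : Category} (E : Lens A B) :
  cat_epi (get E) -> forall b, Im E b.
Proof.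
  intros He b.
  assert (H : functor_eq (Functor_comp_obj (IF (fun _ => false)) (get E))
                         (Functor_comp_obj (IF (tag E)) (get E))).
  { intros x y f. simpl. rewrite !tag_im. reflexivity. }
  specialize (He _ _ _ H b b (idm b)).
  apply (f_equal (fun p => snd (projT1 p))) in He. simpl in He.
  unfold tag in He. destruct (excluded_middle_informative (Im E b)); auto.
  discriminate.
Qed.

Lemma surj_cat_epi {A B : Category} (E : Lens A B) :
  (forall b, Im E b) -> cat_epi (get E).
Proof.
  intros Hs C G H Heq x y f.
  destruct (Hs x) as [a Ha]. subst x.
  pose proof (put_lift E a (existT _ y f)) as HL.
  set (w := put E a (existT _ y f)) in HL.
  pose proof (Heq _ _ (projT2 w)) as Hg. simpl in Hg.
  pose proof (f_equal (fun u : Out (E a) => arr (fmap G (projT2 u))) HL) as H1.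
  pose proof (f_equal (fun u : Out (E a) => arr (fmap H (projT2 u))) HL) as H2.
  simpl in H1, H2. rewrite <- H1, <- H2. exact Hg.
Qed.

Theorem theorem3p6 (A B : Category) (E : Lens A B) :
  lens_epi E <-> cat_epi (get E).
Proof.
  split.
  - intro H. apply surj_cat_epi, lens_epi_surj, H.
  - intros He C K L [HF HP]. split.
    + exact (He C K L HF).
    + intros b u v Huv.
      destruct (cat_epi_surj E He b) as [a Ha]. subst b.
      specialize (HP a u v Huv). simpl in HP.
      pose proof (put_lift E a (put K (E a) u)) as H1.
      pose proof (put_lift E a (put L (E a) v)) as H2.
      rewrite <- H1, <- H2. rewrite HP. reflexivity.
Qed.
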